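(* Let $O\in\mathbb{R}^2$, let $v$ be a uniform random point in $[0,1]^2$, and let $D$ be the diameter of $[0,1]^2\cup\{O\}$. Then $D\le 5\,\mathbb{E}(d(O,v))$.
   Context: $d$ is Euclidean distance. *)

(* Defs.v *)
From HB Require Import structures.
From mathcomp Require Import all_boot all_order all_algebra.
From mathcomp Require Import all_classical all_reals all_analysis.
Set Implicit Arguments. Unset Strict Implicit. Unset Printing Implicit Defensive.
Import Order.TTheory GRing.Theory Num.Theory.
Local Open Scope classical_set_scope.
Local Open Scope ring_scope.

Definition edist {R : realType} (p q : R * R) : R :=
  Num.sqrt ((p.1 - q.1) ^+ 2 + (p.2 - q.2) ^+ 2).

Definition unit_square {R : realType} : set (R * R) :=
  `[0%R, 1%R] `*` `[0%R, 1%R].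

Definition diam {R : realType} (A : set (R * R)) : R :=
  sup [set edist pq.1 pq.2 | pq in A `*` A].

(* uniform distribution on [0,1]^2: 2-dimensional Lebesgue measure
   (product of Lebesgue measures), which has total mass 1 on the square;
   E(d(O,v)) for v uniform in [0,1]^2 *)
Definition expected_dist_unif_square {R : realType} (O : R * R) : \bar R :=
  (\int[(@lebesgue_measure R \x @lebesgue_measure R)%E]_(v in unit_square)
     (edist O v)%:E)%E.

(* Main.v *)
Require Import Defs.
From HB Require Import structures.
From mathcomp Require Import all_boot all_order all_algebra.
From mathcomp Require Import all_classical all_reals all_analysis.
From mathcomp Require Import lra ring measurable_realfun.
Import Order.TTheory GRing.Theory Num.Theory.
Local Open Scope classical_set_scope.
Local Open Scope ring_scope.

Definition mm {R : realType} (i : nat) (a : R) : R :=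
  Num.max 0 (Num.max (a - (i.+1)%:R / 16) (i%:R / 16 - a)).
Definition SS {R : realType} (a : R) : R := \sum_(0 <= i < 16) mm i a / 16.

Lemma mm_props {R : realType} (i : nat) (a : R) :
  [/\ 0 <= mm i a, a - (i.+1)%:R / 16 <= mm i a & i%:R / 16 - a <= mm i a].
Proof.
rewrite /mm; split.
- by rewrite le_max lexx.
- by rewrite le_max le_max lexx orbT.
- by rewrite le_max le_max lexx !orbT.
Qed.

Lemma mm_le {R : realType} (i : nat) (a x : R) :
  i%:R / 16 <= x -> x < (i.+1)%:R / 16 -> mm i a <= `|a - x|.
Proof.
move=> h1 h2; rewrite /mm ge_max normr_ge0 /= ge_max; apply/andP; split.
- by rewrite (le_trans _ (ler_norm _))// lerD2l lerN2 ltW.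
- by rewrite distrC (le_trans _ (ler_norm _))// lerD2r.
Qed.

Lemma SS_bounds {R : realType} (a : R) :
  3/4 <= 7/2 * SS a /\ `|a - 1/2| + 1/2 <= 7/2 * SS a.
Proof.
rewrite /SS /index_iota /= !big_cons big_nil.
have [h0a h0b h0c] := mm_props 0 a.
have [h1a h1b h1c] := mm_props 1 a.
have [h2a h2b h2c] := mm_props 2 a.
have [h3a h3b h3c] := mm_props 3 a.
have [h4a h4b h4c] := mm_props 4 a.
have [h5a h5b h5c] := mm_props 5 a.
have [h6a h6b h6c] := mm_props 6 a.
have [h7a h7b h7c] := mm_props 7 a.
have [h8a h8b h8c] := mm_props 8 a.
have [h9a h9b h9c] := mm_props 9 a.
have [h10a h10b h10c] := mm_props 10 a.
have [h11a h11b h11c] := mm_props 11 a.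
have [h12a h12b h12c] := mm_props 12 a.
have [h13a h13b h13c] := mm_props 13 a.
have [h14a h14b h14c] := mm_props 14 a.
have [h15a h15b h15c] := mm_props 15 a.
split; first by lra.
case: (lerP 0 (a - 1/2)) => h; [rewrite ger0_norm // | rewrite ltr0_norm //]; lra.
Qed.
Lemma edist_le_c {R : realType} (p q : R * R) (c : R) : 0 <= c ->
  (p.1 - q.1) ^+ 2 + (p.2 - q.2) ^+ 2 <= c ^+ 2 -> Defs.edist p q <= c.
Proof.
move=> c0 h; rewrite /Defs.edist -(ger0_norm c0) -sqrtr_sqr ler_sqrt //.
by rewrite sqr_ge0.
Qed.

Lemma edist_l1 {R : realType} (p q : R * R) :
  Defs.edist p q <= `|p.1 - q.1| + `|p.2 - q.2|.
Proof.
apply: edist_le_c; first by rewrite addr_ge0.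
rewrite -[(p.1 - q.1) ^+ 2]real_normK ?num_real // -[(p.2 - q.2) ^+ 2]real_normK ?num_real //.
have := normr_ge0 (p.1 - q.1); have := normr_ge0 (p.2 - q.2).
set U := `|_|; set W := `|_|; move=> hU hW; nra.
Qed.

Lemma dist_half {R : realType} (a x : R) : 0 <= x <= 1 ->
  `|a - x| <= `|a - 1/2| + 1/2.
Proof.
move=> /andP[h0 h1]; apply: (le_trans (ler_distD (1/2) a x)).
rewrite lerD2l ler_norml; apply/andP; split; lra.
Qed.


Lemma sq_in {R : realType} (p : R * R) : unit_square p ->
  (0 <= p.1 <= 1) /\ (0 <= p.2 <= 1).
Proof.
by case: p => x y; rewrite /unit_square /= => -[]; rewrite /= !in_itv.
Qed.

Lemma edistC {R : realType} (p q : R * R) : Defs.edist p q = Defs.edist q p.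
Proof.
by rewrite /Defs.edist -(sqrrN (p.1 - q.1)) -(sqrrN (p.2 - q.2)) !opprB.
Qed.

Lemma O_sq {R : realType} (O v : R * R) : unit_square v ->
  Defs.edist O v <= 7/2 * (SS O.1 + SS O.2).
Proof.
move=> /(sq_in _) [hx hy]; apply: (le_trans (edist_l1 O v)).
have := dist_half O.1 _ hx; have := dist_half O.2 _ hy.
have := SS_bounds O.1; have := SS_bounds O.2. lra.
Qed.

Lemma diam_le {R : realType} (O : R * R) :
  diam (unit_square `|` [set O]) <= 7/2 * (SS O.1 + SS O.2).
Proof.
rewrite /diam; apply: ge_sup.
  by exists (Defs.edist O O), (O, O) => //; split; right.
move=> _ [[p q] [/= Sp Sq] <-] /=.
case: Sp => [Sp|->]; case: Sq => [Sq|->].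
- have [hp1 hp2] := sq_in _ Sp; have [hq1 hq2] := sq_in _ Sq.
  apply: (@le_trans _ _ (3/2)).
    apply: edist_le_c; first lra.
    move: hp1 hp2 hq1 hq2 => /andP[? ?] /andP[? ?] /andP[? ?] /andP[? ?]; nra.
  have := SS_bounds O.1; have := SS_bounds O.2; lra.
- by rewrite edistC; exact: O_sq.
- exact: O_sq.
- apply: (@le_trans _ _ 0).
    by apply: edist_le_c; rewrite ?lexx// !subrr expr0n /= addr0.
  have := SS_bounds O.1; have := SS_bounds O.2; lra.
Qed.


Lemma edist_meas {R : realType} (O : R * R) :
  measurable_fun [set: R * R] (EFin \o (fun v : R * R => Defs.edist O v)).
Proof.
have m1 : measurable_fun [set: R * R] (fun v : R * R => (O.1 - v.1) ^+ 2).
  apply: measurable_funX.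
  exact: (@measurable_funB _ _ _ _ (cst O.1) fst).
have m2 : measurable_fun [set: R * R] (fun v : R * R => (O.2 - v.2) ^+ 2).
  apply: measurable_funX.
  exact: (@measurable_funB _ _ _ _ (cst O.2) snd).
have m3 := measurable_funD m1 m2.
have ms : measurable_fun [set: R] (@Num.sqrt R).
  exact: (@continuous_measurable_fun R Num.sqrt (@sqrt_continuous R)).
have m4 := measurableT_comp ms m3.
exact: (measurableT_comp (@EFin_measurable R setT) m4).
Qed.


Definition cell {R : realType} (p : nat * nat) : set (R * R) :=
  `[p.1%:R / 16, p.1.+1%:R / 16[ `*` `[p.2%:R / 16, p.2.+1%:R / 16[.

Definition idx : seq (nat * nat) := [seq (i, j) | i <- iota 0 16, j <- iota 0 16].

Lemma idx_uniq : uniq idx.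
Proof. by vm_compute. Qed.

Lemma cell_meas {R : realType} p : measurable (@cell R p).
Proof. by apply: measurableX; exact: measurable_itv. Qed.

Lemma cell_mu {R : realType} p :
  (@lebesgue_measure R \x @lebesgue_measure R)%E (cell p) = (1/256)%:E.
Proof.
rewrite product_measure1E; try exact: measurable_itv.
have e1 := @lebesgue_measure_itv R (`[p.1%:R / 16, p.1.+1%:R / 16[)%R.
have e2 := @lebesgue_measure_itv R (`[p.2%:R / 16, p.2.+1%:R / 16[)%R.
simpl in e1, e2.
rewrite {}[X in (X * _)%E]e1 {}[X in (_ * X)%E]e2 /= !lte_fin.
rewrite !ifT; first last.
- by rewrite ltr_pM2r ?invr_gt0 ?ltr0n // ltr_nat.
- by rewrite ltr_pM2r ?invr_gt0 ?ltr0n // ltr_nat.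
rewrite -EFinM; congr (_%:E).
rewrite -!mulrBl -!natrB //= !subSnn; lra.
Qed.

Lemma edist_lb {R : realType} (p q : R * R) :
  7/10 * (`|p.1 - q.1| + `|p.2 - q.2|) <= Defs.edist p q.
Proof.
have hU := normr_ge0 (p.1 - q.1); have hW := normr_ge0 (p.2 - q.2).
rewrite /Defs.edist -[X in X <= _]ger0_norm; last first.
  by apply: mulr_ge0 => //; rewrite addr_ge0.
rewrite -sqrtr_sqr ler_sqrt; last by rewrite addr_ge0 ?sqr_ge0.
rewrite -[(p.1 - q.1) ^+ 2]real_normK ?num_real // -[(p.2 - q.2) ^+ 2]real_normK ?num_real //.
move: hU hW; set U := `|_|; set W := `|_|; move=> hU hW.
have := sqr_ge0 (U - W); nra.
Qed.

Definition cp {R : realType} (O : R * R) (p : nat * nat) : R :=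
  7/10 * (mm p.1 O.1 + mm p.2 O.2).

Lemma cp_ge0 {R : realType} (O : R * R) p : 0 <= cp O p.
Proof.
have [h1 _ _] := mm_props p.1 O.1; have [h2 _ _] := mm_props p.2 O.2.
rewrite /cp; lra.
Qed.





Lemma cp_le2 {R : realType} (O : R * R) p x y (h1 : p.1%:R / 16 <= x) (h2 : x < p.1.+1%:R / 16)
 (h3 : p.2%:R / 16 <= y) (h4 : y < p.2.+1%:R / 16) : cp O p <= Defs.edist O (x, y).
Proof.
apply: le_trans (edist_lb O (x, y)).
have := mm_le p.1 O.1 x h1 h2; have := mm_le p.2 O.2 y h3 h4.
rewrite /cp /=. lra.
Qed.

Lemma cp_le {R : realType} (O : R * R) p v : cell p v -> cp O p <= Defs.edist O v.
Proof.
case: v => x y [] /=; rewrite !in_itv /= => /andP[h1 h2] /andP[h3 h4].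
exact: cp_le2.
Qed.




Lemma sum_pairs {R : realType} (f g : nat -> R) :
  \sum_(p <- idx) (f p.1 + g p.2) =
  16%:R * (\sum_(0 <= i < 16) f i + \sum_(0 <= j < 16) g j).
Proof.
rewrite /idx big_allpairs.
change (\sum_(0 <= i < 16) \sum_(0 <= j < 16) (f i + g j) =
  16%:R * (\sum_(0 <= i < 16) f i + \sum_(0 <= j < 16) g j)).
under eq_bigr => i _ do rewrite big_split sumr_const_nat.
rewrite big_split sumr_const_nat -sumrMnl subn0.
change ((\sum_(0 <= i < 16) (f i *+ 16)) + (\sum_(0 <= i < 16) (g i *+ 16)) =
  16%:R * (\sum_(0 <= i < 16) f i + \sum_(0 <= j < 16) g j)).
rewrite !sumrMnl mulr_natl mulrnDl.
reflexivity.
Qed.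

Lemma sum_cp {R : realType} (O : R * R) :
  \sum_(p <- idx) (cp O p * (1/256)) = 7/10 * (SS O.1 + SS O.2).
Proof.
rewrite (eq_bigr (fun p => 7/160 * (mm p.1 O.1 / 16) + 7/160 * (mm p.2 O.2 / 16))).
  (rewrite (sum_pairs (fun i => 7/160 * (mm i O.1 / 16)) (fun j => 7/160 * (mm j O.2 / 16))) -!mulr_sumr /SS). lra.
move=> p _; rewrite /cp; lra.
Qed.


Lemma sq_meas {R : realType} : measurable (@unit_square R).
Proof. by apply: measurableX; exact: measurable_itv. Qed.

Lemma cells_sub {R : realType} :
  \big[setU/set0]_(p <- idx) (@cell R p) `<=` unit_square.
Proof.
rewrite big_seq; apply: (big_ind (fun S : set (R * R) => S `<=` unit_square)).
- by [].
- by move=> A B hA hB x [/hA|/hB].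
move=> p; rewrite /idx => /allpairsP [[i j] [hi hj ->]] /=.
rewrite mem_iota add0n in hi; rewrite mem_iota add0n in hj.
move=> [x y] [] /=; rewrite !in_itv /= => /andP[h1 h2] /andP[h3 h4]; split; rewrite /= in_itv /=.
- apply/andP; split; first by apply: le_trans h1; rewrite divr_ge0.
  apply/ltW/(lt_le_trans h2); rewrite ler_pdivrMr ?ltr0n // mul1r ler_nat.
  by case/andP: hi.
- apply/andP; split; first by apply: le_trans h3; rewrite divr_ge0.
  apply/ltW/(lt_le_trans h4); rewrite ler_pdivrMr ?ltr0n // mul1r ler_nat.
  by case/andP: hj.
Qed.

Lemma cells_triv {R : realType} : trivIset [set` idx] (@cell R).
Proof.
have e : forall (k l : nat) (x : R), k%:R / 16 <= x -> x < l.+1%:R / 16 -> (k <= l)%N.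
  move=> k l x hk hl; have := le_lt_trans hk hl.
  by rewrite ltr_pM2r ?invr_gt0 ?ltr0n // ltr_nat ltnS.
move=> [i j] [i' j'] _ _ [[x y] [[hx hy] [hx' hy']]].
move: hx hy hx' hy'; rewrite /= !in_itv /=.
move=> /andP[h1 h2] /andP[h3 h4] /andP[h1' h2'] /andP[h3' h4'].
have -> : i = i' by apply/eqP; rewrite eqn_leq (e _ _ _ h1 h2') (e _ _ _ h1' h2).
have -> : j = j' by apply/eqP; rewrite eqn_leq (e _ _ _ h3 h4') (e _ _ _ h3' h4).
by [].
Qed.

Lemma int_lb {R : realType} (O : R * R) :
  ((7/10 * (SS O.1 + SS O.2))%:E <= expected_dist_unif_square O)%E.
Proof.
rewrite /expected_dist_unif_square -sum_cp -sumEFin.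
have mf := edist_meas O.
have f0 : forall D v, D v -> (0 <= (Defs.edist O v)%:E)%E.
  by move=> D v _; rewrite lee_fin sqrtr_ge0.
have mU : measurable (\big[setU/set0]_(p <- idx) (@cell R p)).
  by apply: bigsetU_measurable => p _; exact: cell_meas.
have H : (\int[(@lebesgue_measure R \x @lebesgue_measure R)%E]_(v in
   \big[setU/set0]_(p <- idx) (@cell R p)) (Defs.edist O v)%:E <=
   \int[(@lebesgue_measure R \x @lebesgue_measure R)%E]_(v in unit_square) (Defs.edist O v)%:E)%E.
  apply: ge0_subset_integral => //.
  - exact: sq_meas.
  - exact: measurable_funTS mf.
  - exact: f0.
  - exact: cells_sub.
apply: le_trans H.
have E := @ge0_integral_bigsetU _ _ _ (@lebesgue_measure R \x @lebesgue_measure R)%E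
  _ _ (fun v => (Defs.edist O v)%:E) _ (fun p => cell_meas p) idx_uniq cells_triv
  (measurable_funTS mf) (f0 _).
rewrite E.
apply: lee_sum => p _.
rewrite EFinM -(cell_mu p) -integral_cst; last exact: cell_meas.
apply: ge0_le_integral => //.
+ exact: cell_meas.
+ by move=> v _; rewrite lee_fin cp_ge0.
+ exact: measurable_funTS mf.
+ by move=> v hv; rewrite lee_fin; exact: cp_le.
Qed.


Theorem lemma18 (R : realType) (O : R * R) :
  ((diam (unit_square `|` [set O]))%:E <= 5%:E * expected_dist_unif_square O)%E.
Proof.
have h1 := diam_le O.
have h2 := lee_wpmul2l (lee_tofin (ler0n R 5)) (int_lb O).
apply: le_trans h2.
rewrite -EFinM lee_fin; lra.
Qed.
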